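(* Let $\gamma:(0,T)\to(\mathbb H,0,\infty)$ be $C^3$ with driving function $\lambda$. If $0<LC_\gamma(t)\le A$ for all $t$, then $\lambda$ is $\mathrm{Lip}(1/2)$ with norm bounded above by $\sqrt{2A}$, i.e. $|\lambda(t)-\lambda(s)|\le\sqrt{2A}\sqrt{|t-s|}$ for all $s,t$ in the domain of $\lambda$.
   Context: $\mathbb H$ is the upper half-plane. $\gamma:(0,T)\to(\mathbb H,0,\infty)$ means $\gamma[0,T)$ is a simple curve with $\gamma(0,T)\subset\mathbb H$, $\gamma(0)=0$. The driving function $\lambda$ of $\gamma$: with $\gamma$ parametrized by halfplane capacity, i.e. $g_t:\mathbb H\setminus\gamma(0,t]\to\mathbb H$ conformal with $g_t(z)=z+\frac{2t}{z}+O(1/z^2)$ at $\infty$, $g_t$ solves $\partial_tg_t(z)=2/(g_t(z)-\lambda(t))$, $g_0(z)=z$, with $\lambda(t)=g_t(\gamma(t))$; $\lambda$ is defined on $[0,\tau)$ where $\tau$ is the halfplane capacity of $\gamma$. The Loewner curvature of such a $C^3$ curve is $LC_\gamma(t)=\lambda'(t)^3/\lambda''(t)$ (with $0/0:=0$ and $x/0=\infty$ for $x\neq0$). *)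

(* Defs.v *)
From Stdlib Require Import Reals.
From Coquelicot Require Import Coquelicot.
Open Scope R_scope.

Definition UHP (z : C) : Prop := 0 < Im z.

Definition holo_at (f : C -> C) (z : C) : Prop :=
  @ex_derive C_AbsRing C_NormedModule f z.

Definition C3_real_on (f : R -> R) (a b : R) : Prop :=
  forall t, a < t < b ->
    (forall k, (k <= 3)%nat -> ex_derive_n f k t) /\
    continuous (Derive_n f 3) t.

Definition C3_curve (T : R) (gamma : R -> C) : Prop :=
  C3_real_on (fun t => Re (gamma t)) 0 T /\ C3_real_on (fun t => Im (gamma t)) 0 T.

(** gamma : (0,T) -> (H,0,oo): gamma[0,T) simple, gamma(0) = 0,
    gamma(0,T) in H, gamma continuous at 0 from the right. *)
Definition curve_in_H (T : R) (gamma : R -> C) : Prop :=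
  gamma 0 = 0%C /\
  (forall t, 0 < t < T -> UHP (gamma t)) /\
  (forall s t, 0 <= s < T -> 0 <= t < T -> gamma s = gamma t -> s = t) /\
  filterlim (fun t => Re (gamma t)) (at_right 0) (locally 0) /\
  filterlim (fun t => Im (gamma t)) (at_right 0) (locally 0).

Definition slit_domain (gamma : R -> C) (t : R) (z : C) : Prop :=
  UHP z /\ ~ (exists s, 0 < s <= t /\ gamma s = z).

Definition conformal_onto_H (D : C -> Prop) (g : C -> C) : Prop :=
  (forall z, D z -> holo_at g z) /\
  (forall z w, D z -> D w -> g z = g w -> z = w) /\
  (forall z, D z -> UHP (g z)) /\
  (forall w, UHP w -> exists z, D z /\ g z = w).

Definition hydrodynamic (D : C -> Prop) (g : C -> C) (c : R) : Prop :=
  exists M r0, 0 < r0 /\ forall z, D z -> r0 < Cmod z ->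
    Cmod (g z - z - RtoC c / z) <= M / (Cmod z ^ 2).

Definition boundary_value (D : C -> Prop) (g : C -> C) (w : C) (x : R) : Prop :=
  forall eps, 0 < eps -> exists delta, 0 < delta /\
    forall z, D z -> Cmod (z - w) < delta -> Cmod (g z - RtoC x) < eps.

(** lambda : [0,tau) -> R is the driving function of gamma, where tau (possibly
    +oo) is the halfplane capacity of gamma: phi(t) = hcap(gamma(0,t]) is the
    halfplane-capacity reparametrization, g_{phi(t)} : H \ gamma(0,t] -> H is
    the conformal map with g(z) = z + 2 phi(t)/z + O(1/z^2), and
    lambda(phi(t)) = g_{phi(t)}(gamma(t)). *)
Definition driving_function (T : R) (gamma : R -> C) (tau : Rbar) (lambda : R -> R) : Prop :=
  lambda 0 = 0 /\
  exists (phi : R -> R) (g : R -> C -> C),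
    phi 0 = 0 /\
    (forall s t, 0 <= s -> s < t -> t < T -> phi s < phi t) /\
    (forall u, (0 <= u /\ Rbar_lt u tau) <-> exists t, 0 <= t < T /\ phi t = u) /\
    (forall t, 0 < t < T ->
       conformal_onto_H (slit_domain gamma t) (g t) /\
       hydrodynamic (slit_domain gamma t) (g t) (2 * phi t) /\
       boundary_value (slit_domain gamma t) (g t) (gamma t) (lambda (phi t))).

(** Loewner curvature LC(t) = lambda'(t)^3 / lambda''(t), with 0/0 := 0 and
    x/0 := oo for x <> 0. *)
Definition LC (lambda : R -> R) (t : R) : Rbar :=
  let d1 := Derive lambda t in
  let d2 := Derive_n lambda 2 t in
  if Req_EM_T d2 0 then (if Req_EM_T d1 0 then Finite 0 else p_infty)
  else Finite (d1 ^ 3 / d2).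

(* Main.v *)
Require Import Defs.
From Stdlib Require Import Reals Lra Lia.
From Coquelicot Require Import Coquelicot.
Open Scope R_scope.

Lemma mono_up f df a b : a <= b -> (forall x, a <= x <= b -> is_derive f x (df x)) ->
  (forall x, a<=x<=b -> 0 <= df x) -> f a <= f b.
Proof.
intros Hab Hd Hp. destruct (Rle_lt_or_eq_dec _ _ Hab) as [H|H]; [|subst; lra].
destruct (MVT_gen f a b df) as [c [Hc Heq]].
- intros x Hx. rewrite Rmin_left in Hx by lra. rewrite Rmax_right in Hx by lra. apply Hd; lra.
- intros x Hx. rewrite Rmin_left in Hx by lra. rewrite Rmax_right in Hx by lra.
  apply continuity_pt_filterlim. apply (ex_derive_continuous (K:=R_AbsRing) (V:=R_NormedModule)). exists (df x). apply Hd; lra.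
- rewrite Rmin_left in Hc by lra. rewrite Rmax_right in Hc by lra. specialize (Hp c Hc). nra.
Qed.

Definition good (lam : R -> R) (A r : R) :=
  ex_derive lam r /\ ex_derive (Derive lam) r /\ Derive lam r <> 0 /\
  0 < (Derive lam r)^3 / Derive (Derive lam) r <= A.

Lemma step2 lam A a b : 0 < A -> a <= b -> (forall r, a <= r <= b -> good lam A r) ->
  / (Derive lam b)^2 + 2*b/A <= / (Derive lam a)^2 + 2*a/A.
Proof.
intros HA Hab Hg. apply Ropp_le_cancel.
apply (mono_up (fun y => - (/ (Derive lam y)^2 + 2*y/A))
   (fun y => 2 / ((Derive lam y)^3 / Derive (Derive lam) y) - 2/A)); auto.
- intros x Hx. destruct (Hg x Hx) as [_ [H1 [H2 H3]]].
  assert (Hd2 : Derive (Derive lam) x <> 0).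
  { intro E. rewrite E in H3. unfold Rdiv in H3. rewrite Rinv_0, Rmult_0_r in H3. lra. }
  auto_derive. { repeat split; auto. }
  change (fun y : R => Derive lam y) with (Derive lam). field. repeat split; auto. lra.
- intros x Hx. destruct (Hg x Hx) as [_ [H1 [H2 H3]]].
  cbv beta. set (q := Derive lam x ^ 3 / Derive (Derive lam) x) in *.
  assert (2 / q >= 2 / A). { unfold Rdiv. apply Rle_ge. apply Rmult_le_compat_l. lra.
    apply Rinv_le_contravar; lra. }
  apply Rge_le in H. apply (Rplus_le_compat_r (- (2/A))) in H. rewrite Rplus_opp_r in H. exact H.
Qed.

Lemma step3 lam A (tau:Rbar) r r' : 0 < A ->
  (forall x, 0 < x -> Rbar_lt x tau -> good lam A x) ->
  0 < r -> r <= r' -> Rbar_lt r' tau ->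
  2*(r'-r) <= A * / (Derive lam r)^2.
Proof.
intros HA Hg Hr Hrr' Ht.
assert (Hg' : forall x, r <= x <= r' -> good lam A x).
{ intros x Hx. apply Hg. lra. destruct tau; simpl in *; auto; lra. }
pose proof (step2 lam A r r' HA Hrr' Hg') as H.
destruct (Hg' r' ltac:(lra)) as [_ [_ [Hu _]]].
assert (0 < / Derive lam r' ^ 2). { apply Rinv_0_lt_compat. apply pow2_gt_0; auto. }
assert (2 * r' / A - 2 * r / A <= / Derive lam r ^ 2) by lra.
replace (2*(r'-r)) with (A * (2 * r' / A - 2 * r / A)) by (field; lra).
apply Rmult_le_compat_l; lra.
Qed.

Lemma u_bound lam A (tau:R) r : 0 < A ->
  (forall x, 0 < x -> Rbar_lt x tau -> good lam A x) ->
  0 < r -> r < tau ->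
  (Derive lam r)^2 <= A / (2 * (tau - r)).
Proof.
intros HA Hg Hr Ht.
destruct (Hg r Hr Ht) as [_ [_ [Hu _]]].
set (w := / Derive lam r ^ 2).
assert (Hw : 0 < w) by (apply Rinv_0_lt_compat; apply pow2_gt_0; auto).
assert (HAw : 0 < A * w) by nra.
assert (Hm : 2 * (tau - r) <= A * w).
{ destruct (Rle_or_lt (2 * (tau - r)) (A*w)) as [h|h]; auto.
  pose proof (step3 lam A tau r (r + (A*w + 2*(tau-r))/4) HA Hg Hr ltac:(lra)
     ltac:(simpl; lra)). fold w in H. lra. }
assert (Derive lam r ^ 2 = / w) by (unfold w; rewrite Rinv_inv; auto).
rewrite H. unfold Rdiv. rewrite <- (Rinv_inv A). rewrite <- Rinv_mult.
apply Rinv_le_contravar. { apply Rmult_lt_0_compat; [apply Rinv_0_lt_compat|]; lra. }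
replace (/ A * (2 * (tau - r))) with ((2*(tau-r))/A) by (field; lra).
apply Rmult_le_reg_l with A; auto. replace (A * (2 * (tau - r) / A)) with (2*(tau-r)) by (field; lra). lra.
Qed.

Lemma tau_not_inf lam A r : 0 < A ->
  (forall x, 0 < x -> Rbar_lt x p_infty -> good lam A x) -> 0 < r -> False.
Proof.
intros HA Hg Hr.
destruct (Hg r Hr I) as [_ [_ [Hu _]]].
set (w := / Derive lam r ^ 2).
assert (Hw : 0 < w) by (apply Rinv_0_lt_compat; apply pow2_gt_0; auto).
assert (HAw : 0 < A * w) by nra.
pose proof (step3 lam A p_infty r (r + A*w) HA Hg Hr ltac:(lra) I). fold w in H. lra.
Qed.

Lemma sqrt_sub_le a b c : a <= b -> b <= c -> sqrt (c - a) - sqrt (c - b) <= sqrt (b - a).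
Proof.
intros Hab Hbc.
set (x := sqrt (c - b)). set (y := sqrt (b - a)).
assert (Hx : 0 <= x) by apply sqrt_pos. assert (Hy : 0 <= y) by apply sqrt_pos.
assert (c - a = x*x + y*y).
{ unfold x, y. rewrite !sqrt_sqrt by lra. ring. }
assert (sqrt (c - a) <= x + y).
{ rewrite H. rewrite <- (sqrt_square (x+y)) by lra. apply sqrt_le_1_alt. nra. }
lra.
Qed.

Lemma main_pos lam A (tau:R) s t : 0 < A ->
  (forall x, 0 < x -> Rbar_lt x tau -> good lam A x) ->
  0 < s -> s <= t -> t < tau ->
  Rabs (lam t - lam s) <= sqrt (2*A) * sqrt (t - s).
Proof.
intros HA Hg Hs Hst Ht.
set (K := sqrt (2*A)).
assert (HK : 0 < K) by (apply sqrt_lt_R0; lra).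
assert (HKK : K * K = 2*A) by (apply sqrt_sqrt; lra).
assert (Hb : forall x, s <= x <= t ->
   ex_derive lam x /\ 0 < sqrt (tau - x) /\
   - (K / (2 * sqrt (tau - x))) <= Derive lam x <= K / (2 * sqrt (tau - x))).
{ intros x Hx.
  assert (Hgx : good lam A x) by (apply Hg; simpl; lra).
  destruct Hgx as [He _].
  pose proof (u_bound lam A tau x HA Hg ltac:(lra) ltac:(lra)) as Hu.
  assert (HS : 0 < sqrt (tau - x)) by (apply sqrt_lt_R0; lra).
  assert (HSS : sqrt (tau - x) * sqrt (tau - x) = tau - x) by (apply sqrt_sqrt; lra).
  set (S := sqrt (tau - x)) in *.
  set (c := K / (2 * S)).
  assert (Hc : 0 < c) by (unfold c; apply Rdiv_lt_0_compat; lra).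
  assert (Hcc : c * c = A / (2 * (tau - x))).
  { unfold c. rewrite <- HSS. replace (A / (2 * (S * S))) with ((2*A) / (4 * (S * S))) by (field; lra). rewrite <- HKK. clearbody S K. field. lra. }
  set (u := Derive lam x) in *.
  split; auto. split; auto. fold c. split; nra. }
assert (H1 : lam t + K * sqrt (tau - t) <= lam s + K * sqrt (tau - s)).
{ apply Ropp_le_cancel.
  apply (mono_up (fun x => - (lam x + K * sqrt (tau - x)))
     (fun x => K / (2 * sqrt (tau - x)) - Derive lam x)); auto.
  - intros x Hx. destruct (Hb x Hx) as [He [HS _]].
    auto_derive. { repeat split; auto; lra. } change (fun y : R => lam y) with lam. replace (tau + - x) with (tau - x) by ring. clearbody K. field. lra.
  - intros x Hx. destruct (Hb x Hx) as [_ [_ Hu]]. lra. }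
assert (H2 : lam s - K * sqrt (tau - s) <= lam t - K * sqrt (tau - t)).
{ apply (mono_up (fun x => lam x - K * sqrt (tau - x))
     (fun x => Derive lam x + K / (2 * sqrt (tau - x)))); auto.
  - intros x Hx. destruct (Hb x Hx) as [He [HS _]].
    auto_derive. { repeat split; auto; lra. } change (fun y : R => lam y) with lam. replace (tau + - x) with (tau - x) by ring. clearbody K. field. lra.
  - intros x Hx. destruct (Hb x Hx) as [_ [_ Hu]]. lra. }
pose proof (sqrt_sub_le s t tau Hst ltac:(lra)).
assert (K * (sqrt (tau - s) - sqrt (tau - t)) <= K * sqrt (t - s)) by (apply Rmult_le_compat_l; lra).
apply Rabs_le. split; nra.
Qed.

Lemma LC_good lam (A:R) r : ex_derive lam r /\ ex_derive (Derive lam) r ->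
  Rbar_lt 0 (LC lam r) /\ Rbar_le (LC lam r) A -> good lam A r.
Proof.
intros [H1 H2] [H3 H4]. unfold LC in *. cbv zeta in *.
change (Derive_n lam 2 r) with (Derive (Derive lam) r) in *.
destruct (Req_EM_T (Derive (Derive lam) r) 0) as [E|E].
- destruct (Req_EM_T (Derive lam r) 0); simpl in *; lra.
- simpl in *. repeat split; auto; try lra.
  intro F. rewrite F in H3. unfold Rdiv in H3. ring_simplify in H3. lra.
Qed.

Lemma lim0 lam K t : 0 < t -> 0 <= K ->
  filterlim lam (at_right 0) (locally (lam 0)) ->
  (forall s, 0 < s -> s <= t -> Rabs (lam t - lam s) <= K * sqrt (t - s)) ->
  Rabs (lam t - lam 0) <= K * sqrt (t - 0).
Proof.
intros Ht HK Hl Hm.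
apply le_epsilon. intros eps Heps.
destruct (proj1 (filterlim_locally lam (lam 0)) Hl (mkposreal eps Heps)) as [d Hd].
set (s := Rmin (d/2) t).
assert (Hs0 : 0 < s) by (unfold s; apply Rmin_pos; [pose proof (cond_pos d); lra | lra]).
assert (Hst : s <= t) by apply Rmin_r.
assert (Hsd : s <= d/2) by apply Rmin_l.
assert (Hb : Rabs (lam s - lam 0) < eps).
{ apply (Hd s). unfold ball; simpl; unfold AbsRing_ball, abs, minus, plus, opp; simpl.
  rewrite Ropp_0, Rplus_0_r, Rabs_pos_eq by lra. pose proof (cond_pos d); lra. exact Hs0. }
pose proof (Hm s Hs0 Hst).
assert (K * sqrt (t - s) <= K * sqrt (t - 0)).
{ apply Rmult_le_compat_l; auto. apply sqrt_le_1_alt. lra. }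
pose proof (Rabs_triang (lam t - lam s) (lam s - lam 0)).
replace (lam t - lam s + (lam s - lam 0)) with (lam t - lam 0) in H1 by ring.
lra.
Qed.

Theorem lemma4p5 (T : R) (gamma : R -> C) (tau : Rbar) (lambda : R -> R) (A : R) :
  0 < T ->
  curve_in_H T gamma ->
  C3_curve T gamma ->
  driving_function T gamma tau lambda ->
  (* regularity of the driving function of a C^3 curve (presupposed by LC) *)
  filterlim lambda (at_right 0) (locally (lambda 0)) ->
  (forall t, 0 < t -> Rbar_lt t tau -> continuity_pt lambda t) ->
  (forall t, 0 < t -> Rbar_lt t tau ->
     ex_derive lambda t /\ ex_derive (Derive lambda) t) ->
  (forall t, 0 < t -> Rbar_lt t tau ->
     Rbar_lt 0 (LC lambda t) /\ Rbar_le (LC lambda t) A) ->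
  forall s t, 0 <= s -> Rbar_lt s tau -> 0 <= t -> Rbar_lt t tau ->
    Rabs (lambda t - lambda s) <= sqrt (2 * A) * sqrt (Rabs (t - s)).
Proof.
intros HT Hc HC3 Hdf Hl Hcont HD HLC s t Hs Hst Ht Htt.
assert (Hg : forall x, 0 < x -> Rbar_lt x tau -> good lambda A x).
{ intros x Hx Hxt. apply LC_good; auto. }
assert (Hgen : forall a b, 0 <= a -> a < b -> Rbar_lt b tau ->
   Rabs (lambda b - lambda a) <= sqrt (2*A) * sqrt (b - a)).
{ intros a b Ha Hab Hb.
  assert (Hb0 : 0 < b) by lra.
  assert (HA : 0 < A).
  { destruct (Hg b Hb0 Hb) as [_ [_ [_ Hq]]]. lra. }
  destruct tau as [tau0 | | ].
  - simpl in Hb.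
    destruct (Rle_lt_or_eq_dec _ _ Ha) as [Ha'|Ha'].
    + apply (main_pos lambda A tau0); auto; lra.
    + subst a. apply lim0; auto. apply sqrt_pos.
      intros s' Hs' Hs't. apply (main_pos lambda A tau0); auto; lra.
  - exfalso. apply (tau_not_inf lambda A b HA Hg Hb0).
  - simpl in Hb. contradiction. }
destruct (Rtotal_order s t) as [H|[H|H]].
- rewrite (Rabs_pos_eq (t - s)) by lra. apply Hgen; auto.
- subst. unfold Rminus. rewrite Rplus_opp_r, Rabs_R0. apply Rmult_le_pos; apply sqrt_pos.
- rewrite Rabs_minus_sym, (Rabs_minus_sym t s), (Rabs_pos_eq (s - t)) by lra.
  apply Hgen; auto.
Qed.
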